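(* Let $0<\varepsilon\le\tfrac13$, set $w=\varepsilon$ and $\delta=\dfrac{(1+\varepsilon)(1+w)}{((1+\varepsilon)(1+w)L)^{1/\varepsilon}}$, and run $\textsc{ApproxGeneral}(\varepsilon,\delta,w)$ with any $(1+w)$-approximate oracle $\mathcal{O}$. Then the following hold. (i) $\tau\le m\left\lceil\log_{1+\varepsilon}\frac{(1+\varepsilon)(1+w)}{\delta}\right\rceil$. (ii) $x_\tau/\log_{1+\varepsilon}\frac{(1+\varepsilon)(1+w)}{\delta}$ is a feasible $L$-bounded flow. (iii) The value of this scaled flow is at least $\beta/(1+5\varepsilon)$.
   Context: Let $G=(V,E)$ be a finite directed graph with $m=|E|$, capacities $c:E\to\mathbb{R}_{>0}$, edge lengths $\ell:E\to\mathbb{Z}_{\ge1}$, distinct vertices $s,t$, and a positive integer $L$. Let $\mathcal{P}_L$ be the set of directed simple $s$-$t$ paths $P$ with $\ell(P)=\sum_{e\in P}\ell(e)\le L$, and assume $\mathcal{P}_L\ne\emptyset$. An $L$-bounded flow is a function $x:\mathcal{P}_L\to\mathbb{R}_{\ge0}$, with value $\sum_P x(P)$. It is feasible if $\sum_{P\ni e}x(P)\le c(e)$ for all $e$. For $y:E\to\mathbb{R}_{\ge0}$ let $y(P)=\sum_{e\in P}y(e)$ and $d^L_y(s,t)=\min_{P\in\mathcal{P}_L}y(P)$. Let $\beta$ be the optimum of the LP $\min\{\sum_e c(e)y(e): y\ge0,\ y(P)\ge1\ \forall P\in\mathcal{P}_L\}$, which equals the maximum value of a feasible $L$-bounded flow.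 Logarithms without base are natural. A $(1+w)$-approximate oracle ($w>0$) is a map $\mathcal{O}$ assigning to each $y:E\to\mathbb{R}_{\ge0}$ a path $\mathcal{O}(y)\in\mathcal{P}_L$ with $y(\mathcal{O}(y))\le(1+w)\,d^L_y(s,t)$. Algorithm $\textsc{ApproxGeneral}(\varepsilon,\delta,w)$: - Initialize $i=0$, $y_0\equiv\delta$, and $x_0\equiv0$. Let $\alpha^L(i)=d^L_{y_i}(s,t)$ and $\bar\alpha^L(i)=y_i(\mathcal{O}(y_i))$. - While $\bar\alpha^L(i)<1+w$: - set $i\leftarrow i+1$; - let $P_i=\mathcal{O}(y_{i-1})$ and $c_i=\min_{e\in P_i}c(e)$; - set $x_i=x_{i-1}$ except $x_i(P_i)=x_{i-1}(P_i)+c_i$; - set $y_i(e)=y_{i-1}(e)(1+\varepsilon c_i/c(e))$ for $e\in P_i$, and $y_i(e)=y_{i-1}(e)$ otherwise. - Return $x_i$. $\tau$ is the number of iterations, and $f_i=\sum_Px_i(P)$. *)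

(* Defs.v *)
From Stdlib Require Import Reals List.
Import ListNotations.
Open Scope R_scope.

Definition sumR {A : Type} (f : A -> R) (l : list A) : R :=
  fold_right (fun a acc => f a + acc) 0 l.

Section Paths.
Context {V E : Type}.
Variables (src tgt : E -> V) (len : E -> nat).

Fixpoint walk (u : V) (P : list E) (v : V) : Prop :=
  match P with
  | [] => u = v
  | e :: P' => src e = u /\ walk (tgt e) P' v
  end.

Definition simple_path (s t : V) (P : list E) : Prop :=
  walk s P t /\ NoDup (s :: map tgt P).

Definition plen (P : list E) : nat := fold_right (fun e a => (len e + a)%nat) 0%nat P.

Definition inPL (s t : V) (L : nat) (P : list E) : Prop :=
  simple_path s t P /\ (plen P <= L)%nat.
End Paths.

Definition ypath {E : Type} (y : E -> R) (P : list E) : R := sumR y P.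

(* min_{e in P} c(e)  (P nonempty in use) *)
Definition minc {E : Type} (c : E -> R) (P : list E) : R :=
  match P with
  | [] => 0
  | e :: P' => fold_right (fun e' a => Rmin (c e') a) (c e) P'
  end.

(* (1+w)-approximate oracle: for every y >= 0, O y in P_L and
   y(O y) <= (1+w) * d^L_y(s,t) = (1+w) * min_{Q in P_L} y(Q). *)
Definition approx_oracle {E : Type} (PL : list E -> Prop) (w : R)
  (orc : (E -> R) -> list E) : Prop :=
  forall y : E -> R, (forall e, 0 <= y e) ->
    PL (orc y) /\ forall Q, PL Q -> ypath y (orc y) <= (1 + w) * ypath y Q.

Section Algo.
Context {E : Type}.
Variables (eq_dec : forall a b : E, {a = b} + {a <> b}).
Variables (c : E -> R) (orc : (E -> R) -> list E) (eps delta : R).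

Fixpoint yseq (i : nat) : E -> R :=
  match i with
  | O => fun _ => delta
  | S j => fun e =>
      if in_dec eq_dec e (orc (yseq j))
      then yseq j e * (1 + eps * minc c (orc (yseq j)) / c e)
      else yseq j e
  end.

(* P_{j+1} and c_{j+1} : the path / amount added in iteration j+1 *)
Definition Pstep (j : nat) : list E := orc (yseq j).
Definition cstep (j : nat) : R := minc c (Pstep j).

Definition alphabar (i : nat) : R := ypath (yseq i) (orc (yseq i)).

Definition xflow (i : nat) (P : list E) : R :=
  sumR (fun j => if list_eq_dec eq_dec (Pstep j) P then cstep j else 0) (seq 0 i).

(* the while loop stops after exactly tau iterations *)
Definition stops_at (w : R) (tau : nat) : Prop :=
  1 + w <= alphabar tau /\ forall i, (i < tau)%nat -> alphabar i < 1 + w.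
End Algo.

Section Flows.
Context {E : Type}.
Variables (eq_dec : forall a b : E, {a = b} + {a <> b}).
Variables (es : list E) (ps : list (list E)) (c : E -> R).
(* es enumerates the edges, ps enumerates P_L (both duplicate-free) *)

Definition load (x : list E -> R) (e : E) : R :=
  sumR (fun P => if in_dec eq_dec e P then x P else 0) ps.

Definition flow_value (x : list E -> R) : R := sumR x ps.

Definition feasible_Lflow (x : list E -> R) : Prop :=
  (forall P, x P <> 0 -> In P ps) /\
  (forall P, In P ps -> 0 <= x P) /\
  (forall e, load x e <= c e).

Definition dual_feasible (y : E -> R) : Prop :=
  (forall e, 0 <= y e) /\ (forall P, In P ps -> 1 <= ypath y P).

Definition dual_cost (y : E -> R) : R := sumR (fun e => c e * y e) es.

Definition is_LP_opt (beta : R) : Prop :=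
  (exists y, dual_feasible y /\ dual_cost y = beta) /\
  (forall y, dual_feasible y -> beta <= dual_cost y).
End Flows.

Definition log_base (b x : R) : R := ln x / ln b.

Definition ceilR (x : R) : Z := (1 - up (- x))%Z.

(* Main.v *)
Require Import Defs.
From Stdlib Require Import Reals List Lra Lia.
Import ListNotations.
Open Scope R_scope.

Lemma sumR_nil {A} (f : A -> R) : sumR f [] = 0. Proof. reflexivity. Qed.
Lemma sumR_cons {A} (f : A -> R) a l : sumR f (a :: l) = f a + sumR f l. Proof. reflexivity. Qed.

Lemma sumR_app {A} (f : A -> R) l1 l2 : sumR f (l1 ++ l2) = sumR f l1 + sumR f l2.
Proof. induction l1; simpl; [lra|]. unfold sumR in *; simpl; rewrite IHl1; lra. Qed.

Lemma sumR_ext {A} (f g : A -> R) l : (forall x, In x l -> f x = g x) -> sumR f l = sumR g l.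
Proof. induction l; intros H; simpl; auto. unfold sumR in *; simpl. rewrite H by (left; auto).
  rewrite IHl; auto. intros; apply H; right; auto. Qed.

Lemma sumR_le {A} (f g : A -> R) l : (forall x, In x l -> f x <= g x) -> sumR f l <= sumR g l.
Proof. induction l; intros H; unfold sumR in *; simpl; [lra|].
  assert (f a <= g a) by (apply H; left; auto).
  assert (fold_right (fun a acc => f a + acc) 0 l <= fold_right (fun a acc => g a + acc) 0 l) by (apply IHl; intros; apply H; right; auto). lra. Qed.

Lemma sumR_nonneg {A} (f : A -> R) l : (forall x, In x l -> 0 <= f x) -> 0 <= sumR f l.
Proof. intros H. replace 0 with (sumR (fun _ : A => 0) l). apply sumR_le; auto.
  induction l; auto. unfold sumR in *; simpl. rewrite IHl; [lra|]. intros; apply H; right; auto. Qed.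

Lemma sumR_plus {A} (f g : A -> R) l : sumR (fun x => f x + g x) l = sumR f l + sumR g l.
Proof. induction l; unfold sumR in *; simpl; [lra|]. rewrite IHl; lra. Qed.

Lemma sumR_scal {A} (f : A -> R) k l : sumR (fun x => k * f x) l = k * sumR f l.
Proof. induction l; unfold sumR in *; simpl; [lra|]. rewrite IHl; lra. Qed.

Lemma sumR_zero {A} l : sumR (fun _ : A => 0) l = 0.
Proof. induction l; unfold sumR in *; simpl; [lra|]. rewrite IHl; lra. Qed.

Lemma sumR_const {A} (k : R) (l : list A) : sumR (fun _ => k) l = INR (length l) * k.
Proof. induction l; [simpl; unfold sumR; simpl; lra|]. rewrite sumR_cons, IHl. change (length (a :: l)) with (S (length l)). rewrite S_INR. lra. Qed.

Lemma sumR_elem {A} (f : A -> R) l x : (forall y, In y l -> 0 <= f y) -> In x l -> f x <= sumR f l.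
Proof. induction l; intros H Hx; simpl in Hx; [tauto|]. rewrite sumR_cons.
  destruct Hx as [<-|Hx].
  - assert (0 <= sumR f l) by (apply sumR_nonneg; intros; apply H; right; auto). lra.
  - assert (0 <= f a) by (apply H; left; auto). assert (f x <= sumR f l) by (apply IHl; auto; intros; apply H; right; auto). lra. Qed.

Lemma sumR_bump {A} (f g : A -> R) l b r : (forall x, In x l -> f x <= g x) -> In b l -> f b + r <= g b ->
  sumR f l + r <= sumR g l.
Proof. intros H Hb Hr. induction l; simpl in Hb; [tauto|]. rewrite !sumR_cons.
  destruct Hb as [<-|Hb].
  - assert (sumR f l <= sumR g l) by (apply sumR_le; intros; apply H; right; auto). lra.
  - assert (f a <= g a) by (apply H; left; auto).
    assert (sumR f l + r <= sumR g l) by (apply IHl; auto; intros; apply H; right; auto). lra. Qed.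

Lemma sumR_single {A} (D : forall x y : A, {x = y} + {x <> y}) (a : A) (v : R) l :
  NoDup l -> In a l -> sumR (fun x => if D a x then v else 0) l = v.
Proof. induction l; intros Hn Ha; simpl in Ha; [tauto|]. rewrite sumR_cons.
  apply NoDup_cons_iff in Hn as [Hn1 Hn2]. destruct (D a a0) as [e|e].
  - subst a0. rewrite (sumR_ext _ (fun _ => 0)). rewrite sumR_zero; lra.
    intros x Hx. destruct (D a x); auto. subst; tauto.
  - destruct Ha as [Ha|Ha]; [congruence|]. rewrite IHl; auto; lra. Qed.

Lemma sumR_nz {A} (f : A -> R) l : sumR f l <> 0 -> exists x, In x l /\ f x <> 0.
Proof. induction l; intros H; [rewrite sumR_nil in H; try lra; exfalso; lra|]. rewrite sumR_cons in H. destruct (Req_dec (f a) 0).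
  - destruct IHl as [x [H1 H2]]. lra. exists x; split; [right|]; auto.
  - exists a; split; [left|]; auto. Qed.

Lemma sumR_pos {A} (f : A -> R) l : 0 < sumR f l -> exists x, In x l /\ 0 < f x.
Proof. induction l; intros H; [rewrite sumR_nil in H; try lra; exfalso; lra|]. rewrite sumR_cons in H. destruct (Rlt_dec 0 (f a)).
  - exists a; split; [left|]; auto.
  - destruct IHl as [x [H1 H2]]. lra. exists x; split; [right|]; auto. Qed.

Lemma sumR_swap {A B} (h : A -> B -> R) la lb :
  sumR (fun a => sumR (fun b => h a b) lb) la = sumR (fun b => sumR (fun a => h a b) la) lb.
Proof. induction la.
  - rewrite sumR_nil. symmetry. rewrite (sumR_ext _ (fun _ => 0)). apply sumR_zero. intros; apply sumR_nil.
  - rewrite sumR_cons, IHla. rewrite <- sumR_plus. apply sumR_ext; intros; rewrite sumR_cons; lra. Qed.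

Lemma sumR_sub_nodup {A} (f : A -> R) (l1 l2 : list A) :
  (forall x, 0 <= f x) -> NoDup l1 -> incl l1 l2 -> sumR f l1 <= sumR f l2.
Proof. intros Hf. revert l2. induction l1; intros l2 Hn Hi.
  - rewrite sumR_nil. apply sumR_nonneg; auto.
  - apply NoDup_cons_iff in Hn as [Hn1 Hn2].
    destruct (in_split a l2 (Hi a (or_introl eq_refl))) as [u [v ->]].
    rewrite sumR_cons, sumR_app, sumR_cons.
    assert (sumR f l1 <= sumR f (u ++ v)).
    { apply IHl1; auto. intros x Hx. assert (In x (u ++ a :: v)) by (apply Hi; right; auto).
      apply in_app_or in H. apply in_or_app. destruct H as [H|[H|H]]; auto. subst; tauto. }
    rewrite sumR_app in H. lra. Qed.

Lemma argmin {A} (f : A -> R) l : l <> [] -> exists x, In x l /\ forall y, In y l -> f x <= f y.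
Proof. induction l; intros H; [congruence|]. destruct l as [|b l].
  - exists a. split; [left; auto|]. intros y [<-|[]]; lra.
  - destruct IHl as [x [H1 H2]]; [discriminate|]. destruct (Rle_dec (f a) (f x)).
    + exists a. split; [left;auto|]. intros y [<-|Hy]; [lra|]. specialize (H2 y Hy); lra.
    + exists x. split; [right;auto|]. intros y [<-|Hy]; [lra|]. auto. Qed.

Lemma find_first (Pr : nat -> Prop) (dec : forall n, {Pr n} + {~ Pr n}) N :
  (forall i, (i < N)%nat -> ~ Pr i) \/ exists n, Pr n /\ forall i, (i < n)%nat -> ~ Pr i.
Proof. induction N.
  - left; intros; lia.
  - destruct IHN as [H|H]; [|right; auto]. destruct (dec N).
    + right. exists N; auto.
    + left. intros i Hi. destruct (Nat.eq_dec i N); [subst; auto|]. apply H; lia. Qed.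

Lemma ln_le' x y : 0 < x -> x <= y -> ln x <= ln y.
Proof. intros. destruct (Rle_lt_or_eq_dec x y H0). left; apply ln_increasing; auto. subst; lra. Qed.

Lemma ln_ge_frac x : 0 <= x -> x / (1 + x) <= ln (1 + x).
Proof. intros Hx. assert (h := exp_ineq1_le (- (x / (1+x)))).
  rewrite exp_Ropp in h. set (u := exp (x / (1 + x))) in *.
  assert (0 < u) by apply exp_pos.
  assert (u <= 1 + x).
  { assert (1 + - (x/(1+x)) = /(1+x)) by (field; lra). rewrite H0 in h.
    apply Rinv_le_contravar in h; [|apply Rinv_pos; lra]. rewrite !Rinv_inv in h. lra. }
  unfold u in H0. apply ln_le' in H0; [|apply exp_pos]. rewrite ln_exp in H0. lra. Qed.

Lemma ln_concave eps a : 0 < eps -> 0 <= a <= 1 -> a * ln (1 + eps) <= ln (1 + a * eps).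
Proof. intros He Ha. set (r := ln (1 + eps)).
  assert (Er : exp r = 1 + eps) by (apply exp_ln; lra).
  assert (h1 := exp_ineq1_le (- (a * r))).
  assert (h2 := exp_ineq1_le ((1 - a) * r)).
  assert (E2 : exp ((1 - a) * r) = (1 + eps) * exp (- (a * r))).
  { rewrite <- Er, <- exp_plus. f_equal. ring. }
  set (v := exp (- (a * r))) in *. assert (0 < v) by apply exp_pos.
  assert (Hv : 1 <= (1 + a * eps) * v) by nra.
  assert (0 < 1 + a * eps) by nra.
  assert (/ v <= 1 + a * eps).
  { apply (Rmult_le_reg_r v); auto. rewrite Rinv_l by lra. lra. }
  apply ln_le' in H1; [|apply Rinv_pos; lra]. rewrite ln_Rinv in H1 by lra.
  unfold v in H1. rewrite ln_exp in H1. lra. Qed.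
Lemma final_alg b eps lnX r f : 0 < b -> 0 < eps <= 1/3 -> 0 < lnX -> eps/(1+eps) <= r -> 0 < r ->
  0 <= lnX - lnX/eps + eps*(1+eps)/b*f -> b/(1+5*eps) <= f / ((lnX/eps)/r).
Proof. intros Hb He Hl Hr Hr0 H.
  assert (H1 : 0 <= b*eps*(lnX - lnX/eps + eps*(1+eps)/b*f)) by (apply Rmult_le_pos; nra).
  replace (b*eps*(lnX - lnX/eps + eps*(1+eps)/b*f)) with (b*eps*lnX - b*lnX + eps*eps*(1+eps)*f) in H1 by (field; lra).
  assert (Hf : b*lnX*(1-eps) <= f*(eps*eps*(1+eps))) by lra.
  replace (f / ((lnX/eps)/r)) with (f*eps*r/lnX) by (field; lra).
  assert (Hr' : eps <= r*(1+eps)) by (apply (Rmult_le_compat_r (1+eps)) in Hr; [|lra]; unfold Rdiv in Hr; rewrite Rmult_assoc, Rinv_l in Hr; lra).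
  apply Rle_trans with (b*(1-eps)/((1+eps)*(1+eps))).
  - apply Rmult_le_reg_r with ((1+5*eps)*((1+eps)*(1+eps))); [nra|].
    unfold Rdiv. field_simplify; try lra. assert (0 <= b*eps*(1-3*eps)) by (apply Rmult_le_pos; nra). nra.
  - apply Rmult_le_reg_r with (lnX*((1+eps)*(1+eps))*eps); [repeat apply Rmult_lt_0_compat; lra|].
    unfold Rdiv. field_simplify; try lra.
    assert (0 < b*lnX*(1-eps)) by (repeat apply Rmult_lt_0_compat; lra). assert (Hp: 0 < eps*eps*(1+eps)) by (repeat apply Rmult_lt_0_compat; lra). assert (0 <= f) by (destruct (Rle_dec 0 f); auto; nra).
    assert (Hm := Rmult_le_compat _ _ _ _ (Rlt_le _ _ H0) (Rlt_le _ _ (proj1 He)) Hf Hr'). nra.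
Qed.

Lemma fold_min_props {E} (c : E -> R) (init : R) (l : list E) :
  let G := fold_right (fun e' a => Rmin (c e') a) init l in
  G <= init /\ (forall x, In x l -> G <= c x) /\ (G = init \/ exists x, In x l /\ G = c x).
Proof. induction l; simpl.
  - split; [lra|]. split; [tauto|]. auto.
  - destruct IHl as [H1 [H2 H3]]. set (G := fold_right _ init l) in *.
    split; [apply Rle_trans with G; auto; apply Rmin_r|].
    split. intros x [<-|Hx]; [apply Rmin_l|]. apply Rle_trans with G; auto; apply Rmin_r.
    unfold Rmin; destruct (Rle_dec (c a) G).
    + right; exists a; auto.
    + destruct H3 as [H3|[x [Hx Hx']]]; auto. right; exists x; auto. Qed.

Lemma minc_le {E} (c : E -> R) P e : In e P -> minc c P <= c e.
Proof. destruct P as [|a P]; [simpl; tauto|]. intros H. simpl minc.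
  destruct (fold_min_props c (c a) P) as [H1 [H2 H3]]. destruct H as [<-|H]; auto. Qed.

Lemma minc_in {E} (c : E -> R) P : P <> [] -> exists e, In e P /\ minc c P = c e.
Proof. destruct P as [|a P]; [congruence|]. intros _. simpl minc.
  destruct (fold_min_props c (c a) P) as [H1 [H2 [H3|[x [Hx Hx']]]]].
  - exists a; split; [left|]; auto.
  - exists x; split; [right|]; auto. Qed.

Lemma minc_nonneg {E} (c : E -> R) P : (forall e, 0 < c e) -> 0 <= minc c P.
Proof. intros Hc. destruct P as [|a P]; [simpl; lra|].
  destruct (minc_in c (a :: P)) as [e [_ ->]]; [discriminate|]. left; auto. Qed.

Lemma sumR_filter {A} (b : A -> bool) (f : A -> R) l :
  sumR (fun x => if b x then f x else 0) l = sumR f (filter b l).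
Proof. induction l; [reflexivity|]. simpl filter. rewrite sumR_cons. destruct (b a).
  - rewrite sumR_cons; lra. - lra. Qed.

Lemma sumR_indic_le {A} (D : forall x y : A, {x = y} + {x <> y}) (f : A -> R) (l P : list A) :
  (forall x, 0 <= f x) -> NoDup l -> sumR (fun x => if in_dec D x P then f x else 0) l <= sumR f P.
Proof. intros Hf Hn.
  rewrite (sumR_ext _ (fun x => if (fun x => if in_dec D x P then true else false) x then f x else 0)).
  2:{ intros; simpl; destruct (in_dec D x P); auto. }
  rewrite sumR_filter. apply sumR_sub_nodup; auto. apply NoDup_filter; auto.
  intros x Hx. apply filter_In in Hx as [_ Hx]. destruct (in_dec D x P); auto; discriminate. Qed.

Lemma exch {E} (D : forall x y : list E, {x = y} + {x <> y}) (ps : list (list E)) (wt : list E -> R)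
  (g : nat -> list E) (v : nat -> R) (J : list nat) :
  NoDup ps -> (forall j, In (g j) ps) ->
  sumR (fun Pa => wt Pa * sumR (fun j => if D (g j) Pa then v j else 0) J) ps
  = sumR (fun j => wt (g j) * v j) J.
Proof. intros Hn Hg.
  rewrite (sumR_ext _ (fun Pa => sumR (fun j => wt Pa * (if D (g j) Pa then v j else 0)) J)).
  2:{ intros; rewrite sumR_scal; auto. }
  rewrite sumR_swap. apply sumR_ext. intros j _.
  rewrite (sumR_ext _ (fun Pa => if D (g j) Pa then wt (g j) * v j else 0)).
  - apply sumR_single; auto.
  - intros Pa _. destruct (D (g j) Pa); [subst; auto|lra]. Qed.

Lemma len_plen {E} (len : E -> nat) P : (forall e, (1 <= len e)%nat) -> (length P <= plen len P)%nat.
Proof. intros H. induction P; simpl; auto. specialize (H a). lia. Qed.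

Theorem mainTheorem6
  (V E : Type) (eq_dec : forall a b : E, {a = b} + {a <> b})
  (src tgt : E -> V) (es : list E) (c : E -> R) (len : E -> nat)
  (s t : V) (L : nat) (ps : list (list E))
  (orc : (E -> R) -> list E) (eps w delta beta : R)
  (Hes_nodup : NoDup es) (Hes_full : forall e : E, In e es)
  (Hc : forall e, 0 < c e) (Hlen : forall e, (1 <= len e)%nat)
  (Hst : s <> t) (HL : (1 <= L)%nat)
  (Hps_nodup : NoDup ps)
  (Hps : forall P, In P ps <-> inPL src tgt len s t L P)
  (Hne : exists P, inPL src tgt len s t L P)
  (Heps : 0 < eps <= 1 / 3) (Hw : w = eps)
  (Hdelta : delta = (1 + eps) * (1 + w) /
                    Rpower ((1 + eps) * (1 + w) * INR L) (1 / eps))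
  (HO : approx_oracle (inPL src tgt len s t L) w orc)
  (Hbeta : is_LP_opt es ps c beta) :
  let K := log_base (1 + eps) ((1 + eps) * (1 + w) / delta) in
  exists tau : nat,
    stops_at eq_dec c orc eps delta w tau /\
    INR tau <= INR (length es) * IZR (ceilR K) /\
    feasible_Lflow eq_dec ps c (fun P => xflow eq_dec c orc eps delta tau P / K) /\
    beta / (1 + 5 * eps) <= flow_value ps (fun P => xflow eq_dec c orc eps delta tau P / K).
Proof.
  intros K. subst w.
  set (C := (1 + eps) * (1 + eps)) in *.
  set (X := C * INR L) in *.
  set (Q := Rpower X (1 / eps)) in *.
  set (r := ln (1 + eps)).
  assert (HLr : 1 <= INR L) by (apply (le_INR 1); auto).
  assert (HC : 1 < C) by (unfold C; nra).
  assert (HX : 1 < X) by (unfold X; nra).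
  assert (HlnX : 0 < ln X) by (rewrite <- ln_1; apply ln_increasing; lra).
  assert (HlnQ : ln Q = ln X / eps) by (unfold Q, Rpower; rewrite ln_exp; field; lra).
  assert (HQ : 1 < Q).
  { unfold Q, Rpower. apply Rle_lt_trans with (exp 0); [rewrite exp_0; lra|]. apply exp_increasing.
    apply Rmult_lt_0_compat; [apply Rdiv_lt_0_compat; lra|auto]. }
  assert (Hd0 : 0 < delta) by (rewrite Hdelta; apply Rdiv_lt_0_compat; lra).
  assert (HdC : delta < C).
  { rewrite Hdelta. apply (Rmult_lt_reg_r Q); [lra|]. unfold Rdiv. rewrite Rmult_assoc, Rinv_l by lra. nra. }
  assert (HCd : C / delta = Q) by (rewrite Hdelta; field; lra).
  assert (Hr : eps / (1 + eps) <= r) by (apply ln_ge_frac; lra).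
  assert (Hr0 : 0 < r) by (apply Rlt_le_trans with (eps/(1+eps)); auto; apply Rdiv_lt_0_compat; lra).
  assert (HK : K = (ln X / eps) / r) by (unfold K, log_base; fold C; rewrite HCd, HlnQ; reflexivity).
  assert (HK0 : 0 < K) by (rewrite HK; apply Rdiv_lt_0_compat; auto; apply Rdiv_lt_0_compat; lra).
  set (Y := yseq eq_dec c orc eps delta).
  set (P := Pstep eq_dec c orc eps delta).
  set (cs := cstep eq_dec c orc eps delta).
  set (ab := alphabar eq_dec c orc eps delta).
  assert (Ystep : forall i e, Y (S i) e = if in_dec eq_dec e (P i) then Y i e * (1 + eps * cs i / c e) else Y i e) by reflexivity.
  assert (Hab : forall i, ab i = ypath (Y i) (P i)) by reflexivity.
  assert (Hcs0 : forall i, 0 <= cs i) by (intros; apply minc_nonneg; auto).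
  assert (Hfac : forall i e, 1 <= 1 + eps * cs i / c e).
  { intros. assert (0 <= eps * cs i / c e); [|lra]. apply Rmult_le_pos.
    - apply Rmult_le_pos; [lra|auto].
    - left; apply Rinv_pos; apply Hc. }
  assert (Ymono : forall i e, Y i e <= Y (S i) e).
  { intros. rewrite Ystep. destruct (in_dec eq_dec e (P i)); [|lra].
    assert (Hpos : forall j e, delta <= Y j e).
    { induction j; intros e'; [simpl; lra|]. rewrite Ystep. destruct (in_dec eq_dec e' (P j)); auto.
      specialize (IHj e'); specialize (Hfac j e'); nra. }
    specialize (Hpos i e); specialize (Hfac i e); nra. }
  assert (Ydel : forall i e, delta <= Y i e).
  { induction i; intros e; [simpl; lra|]. apply Rle_trans with (Y i e); auto. }
  assert (Ypos : forall i e, 0 <= Y i e) by (intros; specialize (Ydel i e); lra).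
  assert (HPL : forall i, inPL src tgt len s t L (P i) /\ forall Q', inPL src tgt len s t L Q' -> ab i <= (1 + eps) * ypath (Y i) Q')
    by (intros i; apply (HO (Y i)); auto).
  assert (HPps : forall i, In (P i) ps) by (intros; apply Hps; apply HPL).
  assert (HPne : forall i, P i <> []).
  { intros i Hi. destruct (HPL i) as [[[Hw _] _] _]. rewrite Hi in Hw. simpl in Hw. auto. }
  assert (Hbn : forall i, exists b, In b (P i) /\ cs i = c b) by (intros; apply minc_in; auto).
  assert (Y0 : forall e, Y 0%nat e = delta) by reflexivity.
  assert (Hyp : forall (y : E -> R) Pa, ypath y Pa = sumR y Pa) by reflexivity.
  assert (Bnd : forall n, (forall i, (i < n)%nat -> ab i < 1 + eps) -> forall i, (i <= n)%nat -> forall e, Y i e < C).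
  { intros n Hn. induction i; intros Hi e; [rewrite Y0; lra|].
    rewrite Ystep. destruct (in_dec eq_dec e (P i)) as [Hin|Hin]; [|apply IHi; lia].
    assert (H1 : Y i e <= ab i) by (rewrite Hab, Hyp; apply sumR_elem; auto).
    assert (H2 : ab i < 1 + eps) by (apply Hn; lia).
    assert (H3 : cs i <= c e) by (apply minc_le; auto).
    assert (H4 : eps * cs i / c e <= eps).
    { specialize (Hc e). apply (Rmult_le_reg_r (c e)); auto. unfold Rdiv. rewrite Rmult_assoc, Rinv_l by lra. nra. }
    specialize (Ypos i e). specialize (Hfac i e). unfold C. nra. }
  assert (Pot : forall n, (forall i, (i < n)%nat -> ab i < 1 + eps) -> INR n * r <= INR (length es) * ln Q).
  { intros n Hn. set (Phi := fun i => sumR (fun e => ln (Y i e / delta)) es).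
    assert (Hg : forall i, (i <= n)%nat -> INR i * r <= Phi i).
    { induction i; intros Hi.
      - unfold Phi. rewrite (sumR_ext _ (fun _ => 0)); [rewrite sumR_zero; simpl; lra|].
        intros e _. rewrite Y0. replace (delta / delta) with 1 by (field; lra). apply ln_1.
      - rewrite S_INR. assert (IH := IHi ltac:(lia)).
        destruct (Hbn i) as [b [Hb Hcb]].
        assert (Phi i + r <= Phi (S i)); [|lra].
        unfold Phi. apply sumR_bump with b; auto.
        + intros e _. apply ln_le'. apply Rdiv_lt_0_compat; auto; specialize (Ydel i e); lra.
          apply Rmult_le_compat_r; [left; apply Rinv_pos; auto|]. apply Ymono.
        + rewrite Ystep. destruct (in_dec eq_dec b (P i)) as [_|]; [|tauto].
          rewrite Hcb. replace (Y i b * (1 + eps * c b / c b) / delta) with ((Y i b / delta) * (1 + eps)).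
          2:{ specialize (Hc b). field. split; lra. }
          rewrite ln_mult. unfold r; lra. apply Rdiv_lt_0_compat; auto; specialize (Ydel i b); lra. lra. }
    assert (Phi n <= INR (length es) * ln Q).
    { rewrite <- sumR_const. unfold Phi. apply sumR_le. intros e _. rewrite <- HCd.
      apply ln_le'. apply Rdiv_lt_0_compat; auto; specialize (Ydel n e); lra.
      apply Rmult_le_compat_r; [left; apply Rinv_pos; auto|]. left; apply (Bnd n); auto. }
    specialize (Hg n (le_n n)). lra. }
  destruct (INR_unbounded (INR (length es) * ln Q / r)) as [N HN].
  destruct (find_first (fun n => 1 + eps <= ab n) (fun n => Rle_dec (1 + eps) (ab n)) N) as [Hall|[tau [Htau1 Htau2]]].
  { exfalso. assert (H := Pot N (fun i Hi => Rnot_le_lt _ _ (Hall i Hi))).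
    assert (INR N <= INR (length es) * ln Q / r); [|lra].
    apply (Rmult_le_reg_r r); auto. unfold Rdiv; rewrite Rmult_assoc, Rinv_l by lra. lra. }
  assert (Htau : forall i, (i < tau)%nat -> ab i < 1 + eps) by (intros i Hi; apply Rnot_le_lt; auto).
  exists tau.
  assert (Hceil : K <= IZR (ceilR K)).
  { unfold ceilR. rewrite minus_IZR. destruct (archimed (- K)). simpl; lra. }
  split; [split; auto|].
  split.
  { assert (H := Pot tau Htau). apply Rle_trans with (INR (length es) * K).
    - rewrite HK, <- HlnQ. apply (Rmult_le_reg_r r); auto. replace (INR (length es) * (ln Q / r) * r) with (INR (length es) * ln Q) by (field; lra). lra.
    - apply Rmult_le_compat_l; auto. apply pos_INR. }
  assert (Hx : forall P', xflow eq_dec c orc eps delta tau P' = sumR (fun j => if list_eq_dec eq_dec (P j) P' then cs j else 0) (seq 0 tau)) by reflexivity.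
  assert (LoadB : forall i e, sumR (fun j => if in_dec eq_dec e (P j) then cs j else 0) (seq 0 i) <= c e * ln (Y i e / delta) / r).
  { intros i e. induction i.
    - simpl seq. rewrite sumR_nil, Y0. replace (delta / delta) with 1 by (field; lra). rewrite ln_1. unfold Rdiv. lra.
    - rewrite seq_S, sumR_app, sumR_cons, sumR_nil. simpl (0 + i)%nat.
      rewrite Ystep. destruct (in_dec eq_dec e (P i)) as [Hin|Hin]; [|lra].
      set (a := cs i / c e).
      assert (Ha : 0 <= a <= 1).
      { specialize (Hc e). assert (cs i <= c e) by (apply minc_le; auto). split.
        - apply Rmult_le_pos; auto. left; apply Rinv_pos; auto.
        - apply (Rmult_le_reg_r (c e)); auto. unfold a, Rdiv. rewrite Rmult_assoc, Rinv_l by lra. lra. }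
      assert (Hcon := ln_concave eps a (proj1 Heps) Ha).
      replace (Y i e * (1 + eps * cs i / c e) / delta) with ((Y i e / delta) * (1 + a * eps))
        by (unfold a; specialize (Hc e); field; split; lra).
      assert (0 < 1 + a * eps) by nra.
      rewrite ln_mult; [|apply Rdiv_lt_0_compat; auto; specialize (Ydel i e); lra|lra].
      assert (Hcea : c e * a = cs i) by (unfold a; specialize (Hc e); field; lra).
      assert (c e * (a * r) <= c e * ln (1 + a * eps)) by (apply Rmult_le_compat_l; auto; left; auto).
      replace (c e * (ln (Y i e / delta) + ln (1 + a * eps)) / r) with (c e * ln (Y i e / delta) / r + c e * ln (1 + a * eps) / r) by (field; lra).
      assert (cs i <= c e * ln (1 + a * eps) / r); [|lra].
      apply (Rmult_le_reg_r r); auto. unfold Rdiv. rewrite Rmult_assoc, Rinv_l by lra. nra. }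
  split.
  { split; [|split].
    - intros P' HP'. rewrite Hx in HP'. assert (sumR (fun j => if list_eq_dec eq_dec (P j) P' then cs j else 0) (seq 0 tau) <> 0).
      { intros H0. rewrite H0 in HP'. apply HP'. unfold Rdiv; lra. }
      destruct (sumR_nz _ _ H) as [j [_ Hj]]. destruct (list_eq_dec eq_dec (P j) P') as [<-|]; auto. lra.
    - intros P' _. rewrite Hx. unfold Rdiv; apply Rmult_le_pos; [|left; apply Rinv_pos; auto]. apply sumR_nonneg. intros j _.
      destruct (list_eq_dec eq_dec (P j) P'); auto; lra.
    - intros e. unfold load.
      rewrite (sumR_ext _ (fun Pa => (if in_dec eq_dec e Pa then / K else 0) * sumR (fun j => if list_eq_dec eq_dec (P j) Pa then cs j else 0) (seq 0 tau))).
      2:{ intros Pa _. rewrite Hx. destruct (in_dec eq_dec e Pa); unfold Rdiv; lra. }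
      rewrite (exch (list_eq_dec eq_dec) ps (fun Pa => if in_dec eq_dec e Pa then / K else 0) P cs); auto.
      rewrite (sumR_ext _ (fun j => / K * (if in_dec eq_dec e (P j) then cs j else 0))).
      2:{ intros j _. destruct (in_dec eq_dec e (P j)); lra. }
      rewrite sumR_scal. assert (H := LoadB tau e).
      assert (Hl : ln (Y tau e / delta) <= ln Q).
      { rewrite <- HCd. apply ln_le'. apply Rdiv_lt_0_compat; auto; specialize (Ydel tau e); lra.
        apply Rmult_le_compat_r; [left; apply Rinv_pos; auto|]. left; apply (Bnd tau); auto. }
      assert (c e * ln (Y tau e / delta) / r <= c e * K).
      { rewrite HK, <- HlnQ. specialize (Hc e). unfold Rdiv. rewrite Rmult_assoc. apply Rmult_le_compat_l; [lra|].
        apply Rmult_le_compat_r; auto. left; apply Rinv_pos; auto. }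
      apply (Rmult_le_reg_l K); auto. rewrite <- Rmult_assoc, Rinv_r by lra. nra. }
  destruct Hne as [P0 HP0]. apply Hps in HP0.
  assert (Hb0 : 0 < beta).
  { destruct Hbeta as [[y [[Hy1 Hy2] Hy3]] _]. rewrite <- Hy3.
    assert (H := Hy2 P0 HP0). rewrite Hyp in H. destruct (sumR_pos y P0) as [e [_ He]]; [lra|].
    unfold dual_cost. apply Rlt_le_trans with (c e * y e).
    - apply Rmult_lt_0_compat; auto.
    - apply (sumR_elem (fun e => c e * y e)); auto. intros; apply Rmult_le_pos; [left; apply Hc|auto]. }
  set (D := fun i => sumR (fun e => c e * (Y i e - delta)) es).
  assert (HD0 : forall i, 0 <= D i).
  { intros i. apply sumR_nonneg. intros e _. apply Rmult_le_pos; [left; apply Hc|]. specialize (Ydel i e); lra. }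
  assert (Dstep : forall i, D (S i) <= D i + eps * cs i * ab i).
  { intros i. unfold D.
    rewrite (sumR_ext _ (fun e => c e * (Y i e - delta) + eps * cs i * (if in_dec eq_dec e (P i) then Y i e else 0))).
    2:{ intros e _. rewrite Ystep. destruct (in_dec eq_dec e (P i)); [|lra]. specialize (Hc e). field. lra. }
    rewrite sumR_plus, sumR_scal. assert (H := sumR_indic_le eq_dec (Y i) es (P i) (Ypos i) Hes_nodup).
    rewrite Hab; unfold ypath. assert (0 <= eps * cs i) by (apply Rmult_le_pos; auto; lra).
    assert (H1 := Rmult_le_compat_l _ _ _ H0 H). lra. }
  assert (DB : forall i, exists Q', In Q' ps /\ ypath (Y i) Q' <= delta * INR L + D i / beta).
  { intros i. destruct (argmin (fun Q' => ypath (Y i) Q' - ypath (Y 0%nat) Q') ps) as [Q' [HQ1 HQ2]].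
    { intros H; rewrite H in HP0; auto. }
    exists Q'. split; auto.
    assert (HY0 : forall l, ypath (Y 0%nat) l = sumR (fun _ => delta) l) by (intros; rewrite Hyp; apply sumR_ext; auto).
    assert (HQL : ypath (Y 0%nat) Q' <= delta * INR L).
    { rewrite HY0, sumR_const. rewrite Rmult_comm. apply Rmult_le_compat_l; [lra|]. apply le_INR.
      apply Hps in HQ1. destruct HQ1 as [_ HQ1]. apply Nat.le_trans with (plen len Q'); auto. apply len_plen; auto. }
    set (m0 := ypath (Y i) Q' - ypath (Y 0%nat) Q') in *.
    assert (0 <= D i / beta) by (unfold Rdiv; apply Rmult_le_pos; auto; left; apply Rinv_pos; auto).
    destruct (Rle_dec m0 0) as [Hm|Hm]; [unfold m0 in Hm; lra|]. apply Rnot_le_lt in Hm.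
    assert (Hlin : forall l, sumR (fun e => (Y i e - delta) / m0) l = (ypath (Y i) l - ypath (Y 0%nat) l) / m0).
    { intros l. rewrite HY0; unfold ypath. rewrite (sumR_ext _ (fun e => / m0 * (Y i e + (-1) * delta))).
      2:{ intros; unfold Rdiv; ring. }
      rewrite sumR_scal, sumR_plus, sumR_scal. unfold Rdiv; ring. }
    destruct Hbeta as [_ Hopt].
    assert (Hdf : dual_feasible ps (fun e => (Y i e - delta) / m0)).
    { split.
      - intros e. unfold Rdiv; apply Rmult_le_pos; [specialize (Ydel i e); lra|left; apply Rinv_pos; auto].
      - intros P' HP'. unfold ypath at 1; rewrite Hlin. specialize (HQ2 P' HP'). fold m0 in HQ2.
        apply (Rmult_le_reg_r m0); auto. unfold Rdiv. rewrite Rmult_assoc, Rinv_l by lra. lra. }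
    assert (Hc' : dual_cost es c (fun e => (Y i e - delta) / m0) = D i / m0).
    { unfold dual_cost, D. rewrite (sumR_ext _ (fun e => / m0 * (c e * (Y i e - delta)))).
      2:{ intros; unfold Rdiv; ring. } rewrite sumR_scal. unfold Rdiv; ring. }
    assert (H1 := Hopt _ Hdf). rewrite Hc' in H1.
    assert (Hmm : m0 <= D i / beta).
    { apply (Rmult_le_reg_r beta); auto. unfold Rdiv. rewrite Rmult_assoc, Rinv_l by lra.
      apply (Rmult_le_reg_r (/ m0)); [apply Rinv_pos; auto|]. rewrite Rmult_1_r.
      replace (m0 * beta * / m0) with beta by (field; lra). auto. }
    unfold m0 in Hmm; lra. }
  set (A := eps * (1 + eps) / beta).
  set (f := fun i => sumR cs (seq 0 i)).
  assert (HA : 0 <= A) by (unfold A, Rdiv; apply Rmult_le_pos; [nra|left; apply Rinv_pos; auto]).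
  assert (Hab' : forall i, ab i <= (1 + eps) * (delta * INR L + D i / beta)).
  { intros i. destruct (DB i) as [Q' [HQ1 HQ2]]. apply Hps in HQ1.
    apply Rle_trans with ((1 + eps) * ypath (Y i) Q'). apply (proj2 (HPL i)); auto.
    apply Rmult_le_compat_l; lra. }
  assert (Brec : forall i, delta * INR L + D i / beta <= delta * INR L * exp (A * f i)).
  { induction i.
    - assert (D 0%nat = 0).
      { unfold D. rewrite (sumR_ext _ (fun _ => 0)). apply sumR_zero. intros; rewrite Y0; ring. }
      unfold f; simpl seq. rewrite sumR_nil, H, Rmult_0_r, exp_0. unfold Rdiv; lra.
    - assert (Hf : f (S i) = f i + cs i).
      { unfold f. rewrite seq_S, sumR_app, sumR_cons, sumR_nil. simpl (0 + i)%nat. ring. }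
      rewrite Hf, Rmult_plus_distr_l, exp_plus.
      set (B := delta * INR L + D i / beta) in *.
      assert (HB0 : 0 <= B) by (unfold B; assert (0 <= D i / beta) by (unfold Rdiv; apply Rmult_le_pos; auto; left; apply Rinv_pos; auto); nra).
      assert (H1 : delta * INR L + D (S i) / beta <= B * (1 + A * cs i)).
      { assert (H2 := Dstep i). assert (H3 := Hab' i). fold B in H3.
        assert (D (S i) / beta <= D i / beta + eps * cs i * ((1 + eps) * B) / beta).
        { replace (D i / beta + eps * cs i * ((1 + eps) * B) / beta) with ((D i + eps * cs i * ((1 + eps) * B)) / beta) by (field; lra).
          unfold Rdiv. apply Rmult_le_compat_r; [left; apply Rinv_pos; auto|].
          assert (0 <= eps * cs i) by (apply Rmult_le_pos; auto; lra).
          assert (H4 := Rmult_le_compat_l _ _ _ H H3). lra. }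
        replace (B * (1 + A * cs i)) with (B + eps * cs i * ((1 + eps) * B) / beta) by (unfold A; field; lra).
        unfold B in *. lra. }
      assert (H2 : 1 + A * cs i <= exp (A * cs i)) by apply exp_ineq1_le.
      assert (H3 : B * (1 + A * cs i) <= B * exp (A * cs i)) by (apply Rmult_le_compat_l; auto).
      assert (H4 : B * exp (A * cs i) <= delta * INR L * exp (A * f i) * exp (A * cs i))
        by (apply Rmult_le_compat_r; [left; apply exp_pos|auto]).
      rewrite <- Rmult_assoc. lra. }
  assert (Hfin : 1 <= delta * INR L * exp (A * f tau)).
  { assert (H1 := Hab' tau). assert (H2 := Brec tau).
    assert (1 + eps <= (1 + eps) * (delta * INR L * exp (A * f tau))) by nra.
    nra. }
  assert (Hln : 0 <= ln X - ln X / eps + A * f tau).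
  { apply ln_le' in Hfin; [|lra]. rewrite ln_1 in Hfin.
    assert (0 < INR L) by lra.
    rewrite ln_mult, ln_exp in Hfin; [|nra|apply exp_pos].
    rewrite ln_mult in Hfin; auto.
    assert (Hlnd : ln delta = ln C - ln Q).
    { rewrite Hdelta. unfold Rdiv. rewrite ln_mult, ln_Rinv; try lra; apply Rinv_pos; lra. }
    assert (HlnX' : ln X = ln C + ln (INR L)) by (unfold X; apply ln_mult; lra).
    rewrite Hlnd, HlnQ in Hfin. lra. }
  unfold flow_value.
  rewrite (sumR_ext _ (fun Pa => (fun _ : list E => / K) Pa * sumR (fun j => if list_eq_dec eq_dec (P j) Pa then cs j else 0) (seq 0 tau))).
  2:{ intros Pa _. rewrite Hx. unfold Rdiv; ring. }
  rewrite (exch (list_eq_dec eq_dec) ps (fun _ => / K) P cs); auto.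
  rewrite sumR_scal. fold (f tau).
  replace (/ K * f tau) with (f tau / K) by (unfold Rdiv; ring).
  rewrite HK. apply final_alg; auto. 
Qed.
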